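(* There is a constant $c>0$ such that for every $\omega$-word $\xi\in X^\omega$ that is quasiperiodic (with some quasiperiod $q\in X^*\setminus\{e\}$) there is $n_\xi\in\mathbb{N}$ with $f(\xi,n)\le c\cdot t_P^n$ for all $n\ge n_\xi$, where $t_P\approx1.324718$ is the unique real root of $t^3-t-1$.
   Context: $X$ is a finite alphabet with $|X|\ge2$; $X^*$ the finite words (empty word $e$), $X^\omega$ the infinite words, $X^n$ the words of length $n$. $w\sqsubseteq\eta$ means $w$ is a prefix of $\eta$. An $\omega$-word $\xi$ is quasiperiodic with quasiperiod $q\in X^*\setminus\{e\}$ if for every $j\in\mathbb{N}$ there is a prefix $u_j\sqsubseteq\xi$ with $j-|q|<|u_j|\le j$ and $u_j\cdot q\sqsubseteq\xi$. $f(\xi,n):=|\mathrm{infix}(\xi)\cap X^n|$ is the number of distinct factors (subwords) of $\xi$ of length $n$. *)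

(* Defs.v *)
From mathcomp Require Import all_boot.
From Stdlib Require Import Reals ClassicalEpsilon.
Set Implicit Arguments. Unset Strict Implicit. Unset Printing Implicit Defensive.

Definition is_prefix (X : Type) (u : seq X) (xi : nat -> X) : Prop :=
  forall i, i < size u -> nth (xi i) u i = xi i.

Definition quasiperiodic_with (X : Type) (xi : nat -> X) (q : seq X) : Prop :=
  0 < size q /\
  forall j : nat, exists u : seq X,
    j < size u + size q /\ size u <= j /\ is_prefix u xi /\ is_prefix (u ++ q) xi.

Definition quasiperiodic (X : Type) (xi : nat -> X) : Prop :=
  exists q : seq X, quasiperiodic_with xi q.

Definition is_factor (X : Type) (w : seq X) (xi : nat -> X) : Prop :=
  exists m : nat, forall i, i < size w -> nth (xi (m + i)) w i = xi (m + i).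

Definition factorb (X : Type) (xi : nat -> X) (w : seq X) : bool :=
  if excluded_middle_informative (is_factor w xi) then true else false.

(* f(xi, n) = number of distinct factors of xi of length n *)
Definition fcompl (X : finType) (xi : nat -> X) (n : nat) : nat :=
  #|[set w : n.-tuple X | factorb xi w]|.

(* Main.v *)
Require Import Defs.
From mathcomp Require Import all_boot.
From Stdlib Require Import Reals.
From Stdlib Require Import Lra Lia Psatz Classical ClassicalEpsilon.
Set Implicit Arguments. Unset Strict Implicit. Unset Printing Implicit Defensive.

Fixpoint rs (f : nat -> R) (l : seq nat) : R :=
  match l with [::] => 0%R | d :: l' => (f d + rs f l')%R end.

Lemma rs_cat f l1 l2 : rs f (l1 ++ l2) = (rs f l1 + rs f l2)%R.
Proof. elim: l1 => [|a l IH] /=; [lra|]. rewrite IH; lra. Qed.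

Lemma rs_ext f g l : (forall d, d \in l -> f d = g d) -> rs f l = rs g l.
Proof.
elim: l => [|a l IH] H //=. rewrite H ?mem_head // IH // => d Hd.
apply: H; by rewrite in_cons Hd orbT.
Qed.

Lemma rs_scale c f l : rs (fun d => c * f d)%R l = (c * rs f l)%R.
Proof. elim: l => [|a l IH] /=; [lra|]. rewrite IH; lra. Qed.

Lemma rs_nil_filter f (P : pred nat) l : (forall d, d \in l -> ~~ P d) -> rs f (filter P l) = 0%R.
Proof.
elim: l => [|a l IH] H //=. rewrite (negbTE (H a (mem_head _ _))) IH // => d Hd.
apply: H; by rewrite in_cons Hd orbT.
Qed.

Lemma INR_sumn (g : nat -> nat) f l : (forall d, d \in l -> (INR (g d) <= f d)%R) ->
  (INR (sumn (map g l)) <= rs f l)%R.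
Proof.
elim: l => [|a l IH] H /=; first by simpl; lra.
rewrite -plusE plus_INR. have := H a (mem_head _ _).
have : (INR (sumn (map g l)) <= rs f l)%R.
  apply: IH => d Hd; apply: H; by rewrite in_cons Hd orbT.
lra.
Qed.

Fixpoint G (s : R) (i : nat) : R := match i with 0 => 0%R | i'.+1 => (G s i' + s ^ i')%R end.

Lemma G_rec s i : G s i.+1 = (s * G s i + 1)%R.
Proof. elim: i => [|i IH]; first (simpl; lra). change (G s i.+2) with (G s i.+1 + s ^ i.+1)%R. rewrite {1}IH. simpl. lra. Qed.

Lemma G_closed s i : ((s - 1) * G s i = s ^ i - 1)%R.
Proof. elim: i => [|i IH] /=; first lra. nra. Qed.


Definition Dp (p d : nat) : bool := (p < d) && ~~ (p %| d).
Definition hh (s : R) (p N : nat) : R := rs (fun d => s ^ (N - d))%R (filter (Dp p) (iota 1 N)).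

Lemma hh_step s p N : hh s p N.+1 = (s * hh s p N + (if Dp p N.+1 then 1 else 0))%R.
Proof.
rewrite /hh -addn1 iotaD filter_cat rs_cat add1n addn1 /=.
rewrite -rs_scale; congr (_ + _)%R.
  apply: rs_ext => d; rewrite mem_filter mem_iota => /andP[_ /andP[_ Hd]].
  rewrite add1n ltnS in Hd. rewrite subSn //.
case: (Dp p N.+1) => /=; rewrite ?subnn /=; lra.
Qed.

Lemma hh_small s p N : N <= p -> hh s p N = 0%R.
Proof.
move=> HN; rewrite /hh rs_nil_filter // => d; rewrite mem_iota /Dp => /andP[_ Hd].
rewrite add1n ltnS in Hd. by rewrite ltnNge (leq_trans Hd HN).
Qed.

Definition Cond (p : nat) (s : R) := forall i, i < p -> (G s i.+1 <= s ^ (p + i))%R.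

Lemma hhJ s p : 0 < p -> (1 <= s)%R -> Cond p s -> forall k,
  (hh s p (p + k) <= s ^ (p + k) - s ^ (p + (p + k) %% p) + G s ((p + k) %% p))%R.
Proof.
move=> p0 s1 HC; elim=> [|k IH].
  rewrite addn0 modnn addn0 hh_small //=; lra.
rewrite addnS hh_step modnS.
have Hi := ltn_pmod (p + k) p0.
set i := (p + k) %% p in IH Hi *.
case: (boolP (p %| (p + k).+1)) => Hdv.
- have -> : Dp p (p + k).+1 = false by rewrite /Dp Hdv andbF.
  have Hip : i.+1 = p.
    apply/eqP; rewrite eqn_leq Hi /=.
    apply: dvdn_leq => //.
    move: Hdv; rewrite {1}(divn_eq (p + k) p) -/i -addnS.
    by rewrite (dvdn_addr _ (dvdn_mull _ (dvdnn p))).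
  have HCp := HC i Hi. rewrite /= in HCp.
  have E1 : (s ^ (p + 0) = s * s ^ i)%R by rewrite addn0 -Hip.
  have E2 : (s ^ (p + k).+1 = s * s ^ (p + k))%R by [].
  rewrite E1 E2 /=.
  have := Rmult_le_compat_l s _ _ (ltac:(lra) : (0 <= s)%R) IH.
  have := Rmult_le_compat_l s _ _ (ltac:(lra) : (0 <= s)%R) HCp.
  lra.
- have -> : Dp p (p + k).+1 = true.
    by rewrite /Dp Hdv andbT ltnS leq_addr.
  rewrite G_rec.
  have E1 : (s ^ (p + i.+1) = s * s ^ (p + i))%R by rewrite addnS.
  rewrite E1 /=. nra.
Qed.

Lemma hh_bound s p : 0 < p -> (1 <= s)%R -> Cond p s -> forall N, (hh s p N <= s ^ N - 1)%R.
Proof.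
move=> p0 s1 HC N.
case: (leqP N p) => HN.
  rewrite hh_small //. have := pow_R1_Rle s N s1. lra.
have := hhJ p0 s1 HC (N - p). rewrite subnKC ?(ltnW HN) //.
have Hi := ltn_pmod N p0.
have := HC _ Hi. rewrite /=.
have := pow_R1_Rle s (N %% p) s1.
lra.
Qed.


Definition pb (P : Prop) : bool := if excluded_middle_informative P then true else false.
Lemma pbP (P : Prop) : reflect P (pb P).
Proof. rewrite /pb; case: excluded_middle_informative => H; by constructor. Qed.

Definition occ (X : Type) (xi : nat -> X) (q : seq X) (o : nat) : Prop :=
  forall k, k < size q -> nth (xi 0) q k = xi (o + k).
Definition per (X : Type) (xi : nat -> X) (q : seq X) (d : nat) : Prop :=
  0 < d /\ forall i, i + d < size q -> nth (xi 0) q i = nth (xi 0) q (i + d).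
Definition minper (X : Type) (xi : nat -> X) (q : seq X) (p : nat) : Prop :=
  per xi q p /\ p <= size q /\ (forall d, per xi q d -> p <= d).
Definition Rr (X : Type) (xi : nat -> X) (q : seq X) (p i : nat) : X := nth (xi 0) q (i %% p).
Definition cut (X : Type) (xi : nat -> X) (q : seq X) (p o : nat) : Prop :=
  occ xi q o /\ ~ (p <= o /\ occ xi q (o - p)).

Lemma minper_ex (X : Type) (xi : nat -> X) (q : seq X) : 0 < size q -> exists p, minper xi q p.
Proof.
move=> Hm.
have Hex : exists d, pb (per xi q d).
  exists (size q); apply/pbP; split => // i Hi; by rewrite ltnNge leq_addl in Hi.
exists (ex_minn Hex).
case: ex_minnP => p /pbP Hp Hmin; split => //; split.
  apply: Hmin; apply/pbP; split => // i Hi; by rewrite ltnNge leq_addl in Hi.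
by move=> d Hd; apply: Hmin; apply/pbP.
Qed.

Lemma minper_pos (X : Type) (xi : nat -> X) q p : minper xi q p -> 0 < p.
Proof. by case=> [[]]. Qed.

Lemma Rr_mod (X : Type) (xi : nat -> X) q p a : Rr xi q p (a %% p) = Rr xi q p a.
Proof. by rewrite /Rr modn_mod. Qed.

Lemma Rr_addmul (X : Type) (xi : nat -> X) q p a k : Rr xi q p (k * p + a) = Rr xi q p a.
Proof. by rewrite /Rr modnMDl. Qed.

Lemma qR (X : Type) (xi : nat -> X) q p : minper xi q p ->
  forall i, i < size q -> nth (xi 0) q i = Rr xi q p i.
Proof.
move=> [[p0 Hper] [Hpm _]]; elim/ltn_ind => i IH Hi.
case: (ltnP i p) => Hip.
  by rewrite /Rr modn_small.
have Ei : i = (i - p) + p by rewrite subnK.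
rewrite Ei -Hper -?Ei // IH -?Ei //.
  by rewrite {2}Ei -(Rr_addmul _ _ _ _ 1) mul1n addnC.
by rewrite ltn_subrL p0 (leq_trans p0 Hip).
by apply: leq_ltn_trans Hi; rewrite leq_subr.
Qed.

Lemma occ_dist (X : Type) (xi : nat -> X) q p a b : minper xi q p ->
  occ xi q a -> occ xi q b -> a < b -> b < a + p -> False.
Proof.
move=> [Hper [Hpm Hmin]] Ha Hb Hab Hbp.
have : p <= b - a.
  apply: Hmin; split; first by rewrite subn_gt0.
  move=> i Hi.
  have Hi1 : i < size q by apply: leq_ltn_trans Hi; rewrite leq_addr.
  rewrite (Ha (i + (b - a))) // (Hb i) //.
  congr xi. by rewrite addnCA subnKC ?(ltnW Hab) // addnC.
rewrite leq_subRL ?(ltnW Hab) // => H.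
by move: (leq_ltn_trans H Hbp); rewrite addnC ltnn.
Qed.

Lemma window (X : Type) (xi : nat -> X) q : quasiperiodic_with xi q ->
  forall j, exists o, o <= j /\ j < o + size q /\ occ xi q o.
Proof.
move=> [Hm Hj] j; have [u [H1 [H2 [_ H4]]]] := Hj j.
exists (size u); split => //; split => // k Hk.
have := H4 (size u + k); rewrite size_cat ltn_add2l => /(_ Hk).
rewrite nth_cat ltnNge leq_addr /= addKn => <-.
exact: set_nth_default.
Qed.

Lemma cut0 (X : Type) (xi : nat -> X) q p : quasiperiodic_with xi q -> minper xi q p -> cut xi q p 0.
Proof.
move=> Hq Hp; have [o [Ho [_ Hocc]]] := window Hq 0.
move: Ho; rewrite leqn0 => /eqP Ho; subst o; split => // [[H _]].
by move: (minper_pos Hp); rewrite ltnNge H.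
Qed.

Definition nocut (X : Type) (xi : nat -> X) q p c x := forall y, c < y -> y <= x -> ~ cut xi q p y.

Lemma M0 (X : Type) (xi : nat -> X) q p c x : minper xi q p -> occ xi q c -> nocut xi q p c x ->
  forall o, c <= o -> o <= x -> occ xi q o -> p %| o - c.
Proof.
move=> Hp Hc Hnc; elim/ltn_ind => o IH Hco Hox Ho.
case: (ltngtP c o) Hco => // [Hlt|Heq] _; last by rewrite Heq subnn dvdn0.
have [Hpo Hop] : p <= o /\ occ xi q (o - p).
  apply: NNPP => H; exact: (Hnc o Hlt Hox (conj Ho H)).
have p0 := minper_pos Hp.
case: (ltnP (o - p) c) => Hc2.
  exfalso; apply: (occ_dist Hp Hop Hc Hc2); by rewrite subnK.
have := IH (o - p) _ Hc2 _ Hop.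
rewrite ltn_subrL p0 (leq_trans p0 Hpo) => /(_ erefl).
rewrite (leq_trans (leq_subr _ _) Hox) => /(_ erefl).
rewrite -subnDA addnC subnDA => H.
have -> : o - c = (o - c - p) + p.
  rewrite subnK //. by rewrite leq_subRL ?(ltnW Hlt) // addnC -leq_subRL.
by rewrite dvdn_addl.
Qed.

Lemma M1 (X : Type) (xi : nat -> X) q p c x : quasiperiodic_with xi q -> minper xi q p ->
  occ xi q c -> c <= x -> nocut xi q p c x -> xi x = Rr xi q p (x - c).
Proof.
move=> Hq Hp Hc Hcx Hnc.
have [o [Hox [Hxo Ho]]] := window Hq x.
case: (ltnP o c) => Hoc.
  have Hk : x - c < size q.
    rewrite ltn_subLR //; apply: leq_trans Hxo _.
    by rewrite leq_add2r ltnW.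
  by rewrite -(qR Hp Hk) Hc // subnKC.
have Hd := M0 Hp Hc Hnc Hoc Hox Ho.
have Hk : x - o < size q by rewrite ltn_subLR.
rewrite -{1}(subnKC Hox) -(Ho _ Hk) (qR Hp Hk).
have -> : x - c = (o - c) %/ p * p + (x - o).
  by rewrite divnK // addnC addnBA // subnK.
by rewrite Rr_addmul.
Qed.

Lemma M2 (X : Type) (xi : nat -> X) q p c c' : quasiperiodic_with xi q -> minper xi q p ->
  cut xi q p c -> cut xi q p c' -> c < c' -> (forall y, c < y -> y < c' -> ~ cut xi q p y) ->
  Dp p (c' - c).
Proof.
move=> Hq Hp [Hc _] [Hc' Hnc'] Hlt Hbetween.
have p0 := minper_pos Hp.
have Hge : p <= c' - c.
  rewrite leqNgt; apply/negP => H.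
  apply: (occ_dist Hp Hc Hc' Hlt). by rewrite -ltn_subLR // ltnW.
have Hpc' : p <= c' by apply: leq_trans Hge (leq_subr _ _).
have Hcp : c <= c' - p by rewrite leq_subRL // addnC -leq_subRL // ltnW.
rewrite /Dp; apply/andP; split.
  rewrite ltn_neqAle Hge andbT; apply/negP => /eqP Heq.
  apply: Hnc'; split => //. have -> : c' - p = c by rewrite Heq subKn // ltnW.
  done.
apply/negP => Hdv; apply: Hnc'; split => // i Hi.
case: (ltnP i p) => Hip.
- have Hy : c' - p + i < c' by rewrite -ltn_subRL subKn.
  rewrite (M1 Hq Hp Hc (x := c' - p + i)); first last.
  + move=> z Hz1 Hz2; apply: Hbetween => //; exact: leq_ltn_trans Hz2 Hy.
  + exact: leq_trans Hcp (leq_addr _ _).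
  rewrite (qR Hp Hi).
  have Hk : 0 < (c' - c) %/ p by rewrite divn_gt0.
  have Ek : c' - c - p = ((c' - c) %/ p).-1 * p.
    by rewrite {1}(divn_eq (c' - c) p) (eqP Hdv) addn0 -{1}(prednK Hk) mulSn addKn.
  have -> : c' - p + i - c = ((c' - c) %/ p).-1 * p + i.
    by rewrite -addnBAC // subnAC Ek.
  by rewrite Rr_addmul.
- have -> : c' - p + i = c' + (i - p) by rewrite addnBAC // addnBA.
  have Hip' : i - p < size q by apply: leq_ltn_trans Hi; rewrite leq_subr.
  rewrite -(Hc' _ Hip') (qR Hp Hip') (qR Hp Hi).
  by rewrite -[in RHS](Rr_addmul _ _ _ _ 1) mul1n subnKC.
Qed.

Definition W (X : Type) (xi : nat -> X) (s N : nat) : seq X := mkseq (fun i => xi (s + i)) N.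
Definition Rw (X : Type) (xi : nat -> X) q p (k N : nat) : seq X := mkseq (fun i => Rr xi q p (k + i)) N.

Lemma mkseq_split (T : Type) (f : nat -> T) d e :
  mkseq f (d + e) = mkseq f d ++ mkseq (fun i => f (d + i)) e.
Proof.
rewrite /mkseq iotaD map_cat add0n.
have -> : iota d e = map (addn d) (iota 0 e) by rewrite -iotaDl addn0.
by rewrite -map_comp.
Qed.

Lemma mkseq_in (T : Type) (f g : nat -> T) n : (forall i, i < n -> f i = g i) -> mkseq f n = mkseq g n.
Proof. move=> H; rewrite /mkseq; apply/eq_in_map => i; rewrite mem_iota add0n => /andP[_]; exact: H. Qed.

Lemma first_cut (X : Type) (xi : nat -> X) q p a N :
  (forall y, a <= y -> y < a + N -> ~ cut xi q p y) \/
  exists y, [/\ a <= y, y < a + N, cut xi q p y & forall z, a <= z -> z < y -> ~ cut xi q p z].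
Proof.
elim: N => [|N [IH|IH]].
- left => y H1 H2. by move: (leq_ltn_trans H1 H2); rewrite addn0 ltnn.
- case: (classic (cut xi q p (a + N))) => Hc.
    right; exists (a + N); split => //; by rewrite ?leq_addr ?addnS.
  left => y H1; rewrite addnS ltnS leq_eqVlt => /orP[/eqP ->|H2] //; exact: IH.
- right; case: IH => y [H1 H2 H3 H4]; exists y; split => //; by rewrite addnS ltnW.
Qed.

Lemma last_cut (X : Type) (xi : nat -> X) q p : quasiperiodic_with xi q -> minper xi q p ->
  forall s, exists c, [/\ cut xi q p c, c <= s & nocut xi q p c s].
Proof.
move=> Hq Hp; elim=> [|s [c [H1 H2 H3]]].
  exists 0; split => //; [exact: cut0 | move=> y H1 H2]. by move: (leq_ltn_trans H2 H1); rewrite ltnn.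
case: (classic (cut xi q p s.+1)) => Hc.
  exists s.+1; split => // y H4 H5. by move: (leq_ltn_trans H5 H4); rewrite ltnn.
exists c; split; first done; first by rewrite (leq_trans H2).
move=> y H4; rewrite leq_eqVlt => /orP[/eqP ->|H5] //; exact: H3.
Qed.

Lemma cut_shape (X : Type) (xi : nat -> X) q p : quasiperiodic_with xi q -> minper xi q p ->
  forall c N, cut xi q p c ->
  W xi c N = Rw xi q p 0 N \/
  exists d c', [/\ d <= N, Dp p d, cut xi q p c' & W xi c N = Rw xi q p 0 d ++ W xi c' (N - d)].
Proof.
move=> Hq Hp c N Hc.
have Hocc := Hc.1.
case: (first_cut xi q p c.+1 N) => [H|[y [H1 H2 H3 H4]]].
- left; apply: mkseq_in => i Hi /=.
  rewrite (M1 Hq Hp Hocc (x := c + i)) ?leq_addr ?addKn //.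
  move=> y Hy1 Hy2. apply: H => //. rewrite addSn ltnS. apply: leq_trans Hy2 _. by rewrite leq_add2l ltnW.
- right; exists (y - c), y; split.
  + by rewrite leq_subLR -ltnS -addSn.
  + apply: (M2 Hq Hp Hc H3) => // z Hz1 Hz2; exact: H4.
  + done.
  + rewrite /W -{1}(subnKC (_ : y - c <= N)); last by rewrite leq_subLR -ltnS -addSn.
    rewrite mkseq_split; congr (_ ++ _).
      apply: mkseq_in => i Hi /=.
      rewrite (M1 Hq Hp Hocc (x := c + i)) ?leq_addr ?addKn //.
      move=> z Hz1 Hz2. apply: H4 => //. rewrite ltn_subRL in Hi. exact: leq_ltn_trans Hz2 Hi.
    apply: eq_mkseq => i /=; by rewrite addnA subnKC // ltnW.
Qed.

Lemma Rr_shift (X : Type) (xi : nat -> X) q p a i : Rr xi q p (a + i) = Rr xi q p (a %% p + i).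
Proof. by rewrite /Rr modnDml. Qed.

Lemma factor_shape (X : Type) (xi : nat -> X) q p : quasiperiodic_with xi q -> minper xi q p ->
  forall s N, (exists k, k < p /\ W xi s N = Rw xi q p k N) \/
  exists k l c, [/\ k < p, l < N, cut xi q p c & W xi s N = Rw xi q p k l ++ W xi c (N - l)].
Proof.
move=> Hq Hp s N.
have [c0 [Hc0 Hc0s Hnc0]] := last_cut Hq Hp s.
have p0 := minper_pos Hp.
have key : forall i, (forall z, s <= z -> z <= s + i -> ~ cut xi q p z) ->
    xi (s + i) = Rr xi q p ((s - c0) %% p + i).
  move=> i Hi. rewrite (M1 Hq Hp Hc0.1 (x := s + i)); last first.
    move=> z Hz1 Hz2. case: (leqP z s) => Hzs; first exact: Hnc0.
    apply: Hi => //; exact: ltnW.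
  - exact: leq_trans Hc0s (leq_addr _ _).
  - by rewrite -Rr_shift addnBAC.
case: (first_cut xi q p s N) => [H|[y [H1 H2 H3 H4]]].
- left; exists ((s - c0) %% p); split; first by rewrite ltn_pmod.
  apply: mkseq_in => i Hi /=; apply: key => z Hz1 Hz2; apply: H => //.
  by apply: leq_ltn_trans Hz2 _; rewrite ltn_add2l.
- right; exists ((s - c0) %% p), (y - s), y; split.
  + by rewrite ltn_pmod.
  + by rewrite ltn_subLR.
  + done.
  + rewrite /W -{1}(subnKC (_ : y - s <= N)); last by rewrite leq_subLR ltnW.
    rewrite mkseq_split; congr (_ ++ _).
      apply: mkseq_in => i Hi /=; apply: key => z Hz1 Hz2; apply: H4 => //.
      rewrite ltn_subRL in Hi. exact: leq_ltn_trans Hz2 Hi.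
    apply: eq_mkseq => i /=; by rewrite addnA subnKC.
Qed.


Lemma cover (X : eqType) (xi : nat -> X) q p (s : R) : quasiperiodic_with xi q -> minper xi q p ->
  (1 <= s)%R -> Cond p s -> forall N, exists L : seq (seq X),
  (INR (size L) <= s ^ N)%R /\ forall c, cut xi q p c -> W xi c N \in L.
Proof.
move=> Hq Hp s1 HC; elim/ltn_ind => N IH.
have F : forall N', {L : seq (seq X) | N' < N ->
    (INR (size L) <= s ^ N')%R /\ forall c, cut xi q p c -> W xi c N' \in L}.
  move=> N'; apply: constructive_indefinite_description.
  case: (ltnP N' N) => H.
    have [L HL] := IH N' H; by exists L.
  by exists [::].
pose LL N' := sval (F N').
have HLL : forall N', N' < N -> (INR (size (LL N')) <= s ^ N')%R /\
    forall c, cut xi q p c -> W xi c N' \in LL N' by move=> N'; exact: svalP (F N').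
exists (Rw xi q p 0 N :: flatten [seq [seq Rw xi q p 0 d ++ w | w <- LL (N - d)] | d <- filter (Dp p) (iota 1 N)]).
split.
- have Hs : forall (T:Type) (a:T) l, size (a :: l) = (size l).+1 by []. rewrite Hs S_INR size_flatten /shape -map_comp.
  have -> : map (size \o (fun d => [seq Rw xi q p 0 d ++ w | w <- LL (N - d)])) (filter (Dp p) (iota 1 N))
       = map (fun d => size (LL (N - d))) (filter (Dp p) (iota 1 N)).
    by apply: eq_map => d /=; rewrite size_map.
  have H1 := @INR_sumn (fun d => size (LL (N - d))) (fun d => s ^ (N - d))%R (filter (Dp p) (iota 1 N)).
  have H2 := hh_bound (minper_pos Hp) s1 HC N. rewrite /hh in H2.
  suff : (INR (sumn (map (fun d : nat => size (LL (N - d)%nat)) (filter (Dp p) (iota 1 N)))) <=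
     rs (fun d : nat => (s ^ (N - d)%nat)%R) (filter (Dp p) (iota 1 N)))%R by lra.
  apply: H1 => d; rewrite mem_filter mem_iota => /andP[_ /andP[Hd1 Hd2]].
  rewrite add1n ltnS in Hd2.
  have Hlt : N - d < N by rewrite ltn_subrL Hd1 (leq_trans Hd1 Hd2).
  exact: (HLL _ Hlt).1.
- move=> c Hc; case: (cut_shape Hq Hp N Hc) => [->|[d [c' [Hd HDp Hc' ->]]]].
    by rewrite mem_head.
  rewrite in_cons; apply/orP; right; apply/flatten_mapP; exists d.
    rewrite mem_filter HDp mem_iota add1n ltnS Hd andbT /=.
    by move: HDp => /andP[H _]; apply: leq_ltn_trans H.
  apply: map_f.
  have d0 : 0 < d by move: HDp => /andP[H _]; apply: leq_ltn_trans H.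
  have Hlt : N - d < N by rewrite ltn_subrL d0 (leq_trans d0 Hd).
  exact: (HLL _ Hlt).2.
Qed.

Lemma rs_map f g l : rs f (map g l) = rs (fun x => f (g x)) l.
Proof. elim: l => //= a l ->. done. Qed.

Lemma rs_const c l : rs (fun _ => c) l = (INR (size l) * c)%R.
Proof.
elim: l => [|a l IH]; first (simpl; lra).
have -> : rs (fun _ => c) (a :: l) = (c + rs (fun _ => c) l)%R by [].
rewrite IH. change (size (a::l)) with (size l).+1. rewrite S_INR. lra.
Qed.

Lemma Tlem s n : (1 + rs (fun l => s ^ (n - l)%nat) (iota 0 n) = G s n.+1)%R.
Proof.
elim: n => [|n IH]; first (simpl; lra).
have -> : iota 0 n.+1 = 0 :: iota 1 n by [].
have -> : rs (fun l => (s ^ (n.+1 - l)%nat)%R) (0 :: iota 1 n) =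
   (s ^ n.+1 + rs (fun l => (s ^ (n.+1 - l)%nat)%R) (iota 1 n))%R by [].
rewrite -(addn0 1) iotaDl rs_map.
rewrite (rs_ext (g := fun l => (s ^ (n - l)%nat)%R)); last by move=> d _; rewrite add1n subSS.
have -> : G s n.+2 = (G s n.+1 + s ^ n.+1)%R by [].
rewrite -IH. lra.
Qed.

Lemma card_list (X : finType) n (L : seq (seq X)) (P : pred (n.-tuple X)) :
  (forall w, P w -> val w \in L) -> #|[set w | P w]| <= size L.
Proof.
move=> H; rewrite cardE -(size_map val); apply: uniq_leq_size.
  rewrite map_inj_uniq ?enum_uniq //; exact: val_inj.
move=> x /mapP [w Hw ->]; apply: H. by rewrite mem_enum inE in Hw.
Qed.

Lemma count_bound (X : finType) (xi : nat -> X) q p (s : R) : quasiperiodic_with xi q -> minper xi q p ->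
  (1 <= s)%R -> Cond p s -> forall n, (INR (fcompl xi n) <= INR p * G s n.+1)%R.
Proof.
move=> Hq Hp s1 HC n.
have F : forall N, {L : seq (seq X) |
    (INR (size L) <= s ^ N)%R /\ forall c, cut xi q p c -> W xi c N \in L}.
  move=> N; apply: constructive_indefinite_description; exact: cover.
pose LL N := sval (F N).
have HLL : forall N, (INR (size (LL N)) <= s ^ N)%R /\
    forall c, cut xi q p c -> W xi c N \in LL N by move=> N; exact: svalP (F N).
pose Lk k := Rw xi q p k n :: flatten [seq [seq Rw xi q p k l ++ w | w <- LL (n - l)] | l <- iota 0 n].
pose Lf := flatten [seq Lk k | k <- iota 0 p].
have Hcard : fcompl xi n <= size Lf.
  rewrite /fcompl; apply: card_list => w.
  rewrite /factorb; case: excluded_middle_informative => // [[m0 Hm0]] _.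
  have Ew : val w = W xi m0 n.
    apply: (@eq_from_nth _ (xi 0)); first by rewrite size_tuple size_mkseq.
    move=> i; rewrite size_tuple => Hi. rewrite nth_mkseq //.
    rewrite (set_nth_default (xi (m0 + i))) ?size_tuple //. apply: Hm0; by rewrite size_tuple.
  rewrite Ew.
  case: (factor_shape Hq Hp m0 n) => [[k [Hk ->]]|[k [l [c [Hk Hl Hc ->]]]]].
  - apply/flatten_mapP; exists k; first by rewrite mem_iota.
    by rewrite /Lk mem_head.
  - apply/flatten_mapP; exists k; first by rewrite mem_iota.
    rewrite /Lk in_cons; apply/orP; right; apply/flatten_mapP; exists l; first by rewrite mem_iota.
    apply: map_f. exact: (HLL _).2.
apply: Rle_trans (_ : INR (size Lf) <= _)%R.
  by apply: le_INR; apply/leP.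
have -> : INR p = INR (size (iota 0 p)) by rewrite size_iota.
rewrite /Lf size_flatten /shape -map_comp -rs_const.
apply: INR_sumn => k _. rewrite /Lk.
have Hs : forall (T:Type) (a:T) l, size (a :: l) = (size l).+1 by [].
rewrite [(size \o _) k]/= S_INR size_flatten /shape -map_comp -Tlem.
have H1 := @INR_sumn (size \o (fun l => [seq Rw xi q p k l ++ w | w <- LL (n - l)%nat]))
   (fun l => (s ^ (n - l)%nat)%R) (iota 0 n).
suff : (INR (sumn (map (size \o (fun l => [seq Rw xi q p k l ++ w | w <- LL (n - l)%nat])) (iota 0 n))) <=
   rs (fun l => (s ^ (n - l)%nat)%R) (iota 0 n))%R by lra.
apply: H1 => l _ /=. rewrite size_map. exact: (HLL _).1.
Qed.


Lemma tP_gt (t : R) : (t ^ 3 - t - 1 = 0)%R -> (33/25 < t)%R.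
Proof.
intros H. destruct (Rlt_le_dec (33/25) t) as [h|h]; [exact h|exfalso].
assert (P : (0 < t*t + 33/25*t + 464/625)%R) by (pose proof (pow2_ge_0 (t + 33/50)); simpl in *; lra).
assert (Q : (0 <= (33/25 - t) * (t*t + 33/25*t + 464/625))%R) by (apply Rmult_le_pos; lra).
simpl in H. lra.
Qed.

Lemma Cond_t (t : R) p : (t ^ 3 - t - 1 = 0)%R -> 0 < p -> p <= 3 -> Cond p t.
Proof.
move=> H p0 p3; have Ht := tP_gt H.
have t1 : (1 < t)%R by lra.
simpl in H.
move=> i Hi.
case: p p0 p3 Hi => [|[|[|[|p]]]] // _ _; case: i => [|[|[|i]]] // _; simpl; nra.
Qed.

Lemma Cond_s0 p : 3 < p -> Cond p (33/25)%R.
Proof.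
move=> p3 i Hi.
have p0 : 0 < p by apply: leq_trans p3.
set s := (33/25)%R.
have s1 : (1 <= s)%R by rewrite /s; lra.
have HG := G_closed s i.+1.
have Ep : p + i = i.+1 + (p.-1) by rewrite addSn -addnS (prednK p0) addnC.
rewrite Ep pow_add.
have Hb : (s ^ 3 <= s ^ p.-1)%R by apply: Rle_pow => //; apply/leP; rewrite -ltnS (prednK p0).
have Ha : (s ^ i.+1 <= s * s ^ p.-1)%R.
  have -> : (s * s ^ p.-1 = s ^ p.-1.+1)%R by [].
  apply: Rle_pow => //; apply/leP; by rewrite (prednK p0).
have Ha1 := pow_R1_Rle s i.+1 s1.
have Hs3 : (s ^ 3 = 35937/15625)%R by rewrite /s /=; lra.
rewrite Hs3 in Hb.
move: HG Ha Ha1 Hb. rewrite /s.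
generalize (G (33/25) i.+1) ((33/25) ^ i.+1)%R ((33/25) ^ p.-1)%R => g a b.
move=> HG Ha Ha1 Hb.
have Eg : (g = (a - 1) * (25/8))%R by lra.
rewrite Eg.
destruct (Rle_lt_dec (25/8) b) as [h|h].
  have : (a * (25/8) <= a * b)%R by apply: Rmult_le_compat_l; lra.
  lra.
have h1 : (0 <= (33/25 * b - a) * (25/8 - b))%R by apply: Rmult_le_pos; lra.
have h2 : (0 <= (b - 35937/15625) * (b - 35937/15625))%R by nra.
nra.
Qed.

Lemma G_le s n : (1 < s)%R -> (G s n <= s ^ n / (s - 1))%R.
Proof.
move=> s1; have H := G_closed s n.
apply: (Rmult_le_reg_l (s - 1)); first lra.
rewrite H; field_simplify; lra.
Qed.

Lemma G_ge0 s n : (0 <= s)%R -> (0 <= G s n)%R.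
Proof. move=> s0; elim: n => [|n IH] /=; first lra. have := pow_le s n s0. lra. Qed.

Unset Implicit Arguments.

Theorem theorem3 (X : finType) (hX : 1 < #|X|) (tP : R)
  (htP : (tP ^ 3 - tP - 1)%R = 0%R) :
  exists c : R, (0 < c)%R /\
    forall xi : nat -> X, quasiperiodic xi ->
      exists nxi : nat, forall n : nat, nxi <= n ->
        (INR (fcompl xi n) <= c * tP ^ n)%R.
Proof.
have Ht := tP_gt htP.
have t1 : (1 < tP)%R by lra.
exists (3 * tP / (tP - 1))%R; split.
  apply: Rdiv_lt_0_compat; lra.
move=> xi [q Hq].
have [p Hp] := minper_ex xi Hq.1.
have p0 := minper_pos Hp.
case: (leqP p 3) => Hp3.
- exists 0 => n _.
  have H1 := count_bound Hq Hp (Rlt_le _ _ t1) (Cond_t htP p0 Hp3) n.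
  have H2 := G_le n.+1 t1.
  have H3 : (INR p <= 3)%R by have := le_INR p 3 (elimT leP Hp3); simpl; lra.
  have H4 := G_ge0 n.+1 (ltac:(lra) : (0 <= tP)%R).
  apply: (Rle_trans _ _ _ H1).
  apply: Rle_trans (_ : 3 * (tP ^ n.+1 / (tP - 1)) <= _)%R.
    apply: Rmult_le_compat => //; first exact: pos_INR.
  have -> : (tP ^ n.+1 = tP * tP ^ n)%R by [].
  right; field; lra.
- set s0 := (33/25)%R.
  have s01 : (1 < s0)%R by rewrite /s0; lra.
  have HC := Cond_s0 Hp3.
  have Hx : (Rabs (s0 / tP) < 1)%R.
    rewrite Rabs_right; last by apply: Rle_ge; apply: Rlt_le; apply: Rdiv_lt_0_compat; lra.
    apply: (Rmult_lt_reg_r tP); first lra.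
    have -> : (s0 / tP * tP = s0)%R by field; lra.
    rewrite /s0; lra.
  have Hpp : (0 < INR p)%R by apply: lt_0_INR; apply/ltP.
  have Hy : (0 < (3 * tP / (tP - 1)) / (INR p * (33/8)))%R.
    apply: Rdiv_lt_0_compat; last nra. apply: Rdiv_lt_0_compat; lra.
  have [N HN] := pow_lt_1_zero _ Hx _ Hy.
  exists N => n Hn.
  have HNn := HN n (elimT leP Hn).
  rewrite Rabs_right in HNn; last first.
    apply: Rle_ge; apply: pow_le; apply: Rlt_le; apply: Rdiv_lt_0_compat; lra.
  have H1 := count_bound Hq Hp (Rlt_le _ _ s01) HC n.
  have H2 := G_le n.+1 s01.
  have Es : (s0 ^ n = (s0 / tP) ^ n * tP ^ n)%R.
    rewrite -Rpow_mult_distr; congr pow; field; lra.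
  apply: (Rle_trans _ _ _ H1).
  apply: Rle_trans (_ : INR p * (s0 ^ n.+1 / (s0 - 1)) <= _)%R.
    apply: Rmult_le_compat_l => //; lra.
  have -> : (INR p * (s0 ^ n.+1 / (s0 - 1)) = (INR p * (33/8)) * (s0/tP) ^ n * tP ^ n)%R.
    have -> : (s0 ^ n.+1 = s0 * s0 ^ n)%R by [].
    rewrite Es /s0; field.
  have Htn : (0 < tP ^ n)%R by apply: pow_lt; lra.
  have : ((INR p * (33/8)) * (s0/tP) ^ n <= 3 * tP / (tP - 1))%R.
    have E : (3 * tP / (tP - 1) = (INR p * (33/8)) * ((3 * tP / (tP - 1)) / (INR p * (33/8))))%R.
      field; lra.
    rewrite {1}E. apply: Rmult_le_compat_l; lra.
  move=> H. apply: Rmult_le_compat_r; lra.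
Qed.
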